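(* Let $M_k$ be a Bott tower with non-negative Bott numbers $c_{i,j}\ge 0$, and let $D=\sum_{i=1}^k a_iD_{k+i}$ ($a_i\in\mathbb{Z}$) be a $T$-invariant divisor on $M_k$. Then $D$ is nef and big if and only if $a_k>0$, $a_i\ge 0$ for $1\le i<k$, and for every $i\in\{1,\dots,k-1\}$ with $a_i=0$, at least one of the numbers $c_{i,j}$ ($j>i$) is nonzero.
   Context: Given integers $c_{i,j}$ ($1\le i<j\le k$) (Bott numbers), let $e_1,\dots,e_k$ be the standard basis of $\mathbb{Z}^k$. The Bott tower $M_k$ is the nonsingular projective toric variety whose fan has the $2k$ rays generated by $v_i=e_i$ ($1\le i\le k$), $v_{k+i}=-e_i+c_{i,i+1}e_{i+1}+\cdots+c_{i,k}e_k$ ($1\le i\le k-1$), $v_{2k}=-e_k$, and whose maximal cones are the $2^k$ cones generated by $k$ of these vectors containing, for each $i$, exactly one of $v_i,v_{k+i}$. $D_j$ denotes the torus-invariant prime divisor of $v_j$; the Picard group is free on $D_{k+1},\dots,D_{2k}$, with $D_i\sim D_{k+i}-\sum_{l<i}c_{l,i}D_{k+l}$. *)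

(* Defs.v *)
From HB Require Import structures.
From mathcomp Require Import all_boot all_order all_algebra.
Set Implicit Arguments. Unset Strict Implicit. Unset Printing Implicit Defensive.
Import Order.TTheory GRing.Theory Num.Theory.
Local Open Scope ring_scope.

(* Rays of the Bott tower fan, indexed by 'I_k * bool:
   (i, false) is v_{i+1} = e_{i+1};
   (i, true)  is v_{k+i+1} = -e_{i+1} + sum_{j>i} c_{i,j} e_j
   (for i = k-1 this is -e_k).  Indices are 0-based. *)
Definition bott_ray (k : nat) (c : 'I_k -> 'I_k -> int) (r : 'I_k * bool)
  : 'I_k -> int :=
  fun j => if r.2 then (if j == r.1 then -1 else if (r.1 < j)%N then c r.1 j else 0)
           else (j == r.1)%:Z.

(* Coefficient of D = sum_i a_i D_{k+i} on the prime divisor of ray r. *)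
Definition bott_divcoef (k : nat) (a : 'I_k -> int) (r : 'I_k * bool) : int :=
  if r.2 then a r.1 else 0.

(* Maximal cones are indexed by s : 'I_k -> bool, the cone containing
   v_{i+1} if s i = false and v_{k+i+1} if s i = true. *)
Definition bott_in_cone (k : nat) (s : 'I_k -> bool) (r : 'I_k * bool) : bool :=
  s r.1 == r.2.

Definition zpair (k : nat) (m v : 'I_k -> int) : int := \sum_(j < k) m j * v j.

(* Nef (CLS Thm 6.1.7/6.1.10, smooth complete fan): for every maximal cone
   sigma, the Cartier datum m_sigma (with <m_sigma,v_rho> = -d_rho on the rays
   of sigma) lies in the polyhedron P_D, i.e. <m_sigma,v_rho> >= -d_rho for
   all rays rho. *)
Definition bott_nef (k : nat) (c : 'I_k -> 'I_k -> int) (a : 'I_k -> int) : Prop :=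
  forall s : 'I_k -> bool, exists m : 'I_k -> int,
    (forall r, bott_in_cone s r -> zpair m (bott_ray c r) = - bott_divcoef a r) /\
    (forall r, - bott_divcoef a r <= zpair m (bott_ray c r)).

(* Big: the polytope P_D = {m in M_R | <m,v_rho> >= -d_rho} is full
   dimensional (vol(D) = k! vol(P_D)), i.e. has a point (rational suffices)
   satisfying all defining inequalities strictly. *)
Definition bott_big (k : nat) (c : 'I_k -> 'I_k -> int) (a : 'I_k -> int) : Prop :=
  exists m : 'I_k -> rat, forall r : 'I_k * bool,
    - (bott_divcoef a r)%:~R < \sum_(j < k) m j * (bott_ray c r j)%:~R.

(* Main.v *)
Require Import Defs.
From HB Require Import structures.
From mathcomp Require Import all_boot all_order all_algebra zify.
Import Order.TTheory GRing.Theory Num.Theory.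
Local Open Scope ring_scope.

Lemma ray_false (R : pzRingType) k (c : 'I_k -> 'I_k -> int) (m : 'I_k -> R) i :
  \sum_(j < k) m j * (bott_ray c (i, false) j)%:~R = m i.
Proof.
rewrite (bigD1 i) //= /bott_ray /= eqxx mulr1 big1 ?addr0 // => j /negbTE ->.
by rewrite mulr0.
Qed.

Lemma ray_true (R : pzRingType) k (c : 'I_k -> 'I_k -> int) (m : 'I_k -> R) i :
  \sum_(j < k) m j * (bott_ray c (i, true) j)%:~R =
  - m i + \sum_(j < k | (i < j)%N) m j * (c i j)%:~R.
Proof.
rewrite (bigD1 i) //= /bott_ray /= eqxx mulrN1z mulrN1; congr (_ + _).
rewrite [RHS]big_mkcond [LHS]big_mkcond; apply: eq_bigr => j _ /=.
case: eqP => [->|/eqP ji]; first by rewrite ltnn.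
by case: ifP => //; rewrite mulr0.
Qed.

Lemma zpairE k (m v : 'I_k -> int) : zpair m v = \sum_(j < k) m j * (v j)%:~R.
Proof. by apply: eq_bigr => j _; rewrite intz. Qed.

Lemma sum_intz k (i : 'I_k) (c : 'I_k -> 'I_k -> int) (m : 'I_k -> int) :
  \sum_(j < k | (i < j)%N) m j * (c i j)%:~R = \sum_(j < k | (i < j)%N) m j * c i j.
Proof. by apply: eq_bigr => j _; rewrite intz. Qed.

Lemma nef_exists k (c : 'I_k -> 'I_k -> int) (a : 'I_k -> int)
  (hc : forall i j : 'I_k, (i < j)%N -> 0 <= c i j) (ha : forall i, 0 <= a i)
  (s : 'I_k -> bool) n : (n <= k)%N ->
  exists m : 'I_k -> int,
    (forall j : 'I_k, (k - n <= j)%N ->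
       m j = if s j then a j + \sum_(l < k | (j < l)%N) m l * c j l else 0) /\
    (forall j, 0 <= m j).
Proof.
elim: n => [|n IH] hn.
  exists (fun _ => 0); split => // j; rewrite subn0 => hj.
  by have := ltn_ord j; rewrite ltnNge hj.
have [m [hm hpos]] := IH (ltnW hn).
have hi : (k - n.+1 < k)%N by lia.
pose i := Ordinal hi.
pose v := if s i then a i + \sum_(l < k | (i < l)%N) m l * c i l else 0.
have eqS : forall j : 'I_k, (i <= j)%N ->
  \sum_(l < k | (j < l)%N) (fun x => if x == i then v else m x) l * c j l =
  \sum_(l < k | (j < l)%N) m l * c j l.
  move=> j hj; apply: eq_bigr => l hl; case: eqP => // li.
  by move: hl; rewrite li ltnNge hj.
exists (fun x => if x == i then v else m x); split.
- move=> j hj; case: eqP => [->|/eqP ji].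
    by rewrite eqS //.
  rewrite eqS; last by apply: ltnW; rewrite ltn_neqAle eq_sym; apply/andP; split.
  apply: hm.
  have : val j != val i by [].
  rewrite /= => hne; lia.
- move=> j; case: eqP => _ //; rewrite /v; case: ifP => // _.
  apply: addr_ge0 => //; apply: sumr_ge0 => l hl; apply: mulr_ge0 => //.
  exact: hc.
Qed.

Lemma big_exists k (c : 'I_k -> 'I_k -> int) (a : 'I_k -> int)
  (hc : forall i j : 'I_k, (i < j)%N -> 0 <= c i j) (ha : forall i, 0 <= a i)
  (hlast : forall i : 'I_k, i.+1 = k -> 0 < a i)
  (h3 : forall i : 'I_k, (i.+1 < k)%N -> a i = 0 ->
      exists j : 'I_k, (i < j)%N /\ c i j != 0)
  n : (n <= k)%N ->
  exists m : 'I_k -> rat,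
    (forall j : 'I_k, (k - n <= j)%N ->
       0 < m j < (a j)%:~R + \sum_(l < k | (j < l)%N) m l * (c j l)%:~R).
Proof.
elim: n => [|n IH] hn.
  exists (fun _ => 0) => j; rewrite subn0 => hj.
  by have := ltn_ord j; rewrite ltnNge hj.
have [m hm] := IH (ltnW hn).
have hi : (k - n.+1 < k)%N by lia.
pose i := Ordinal hi.
pose S := (a i)%:~R + \sum_(l < k | (i < l)%N) m l * (c i l)%:~R : rat.
have Spos : 0 < S.
  have mpos : forall l : 'I_k, (i < l)%N -> 0 < m l.
    by move=> l hl; have /andP[] := hm l (ltac:(rewrite /= in hl; lia)).
  have Sge : 0 <= \sum_(l < k | (i < l)%N) m l * (c i l)%:~R.
    apply: sumr_ge0 => l hl; apply: mulr_ge0; first exact: ltW (mpos l hl).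
    by rewrite ler0z; apply: hc.
  have [hlt|hk] := ltnP i.+1 k.
    have [a0|anz] := eqVneq (a i) 0.
      have [j [hj cj]] := h3 i hlt a0.
      rewrite /S a0 add0r (bigD1 j) //=.
      apply: ltr_pwDl; last first.
        apply: sumr_ge0 => l /andP[hl _]; apply: mulr_ge0; first exact: ltW (mpos l hl).
        by rewrite ler0z; apply: hc.
      apply: mulr_gt0; first exact: mpos.
      by rewrite ltr0z lt_def cj hc.
    rewrite /S -[0]addr0; apply: ltr_leD => //.
    by rewrite ltr0z lt_def anz ha.
  rewrite /S -[0]addr0; apply: ltr_leD => //.
  by rewrite ltr0z; apply: hlast; have := ltn_ord i; lia.
have eqS : forall j : 'I_k, (i <= j)%N ->
  \sum_(l < k | (j < l)%N) (fun x => if x == i then S / 2 else m x) l * (c j l)%:~R =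
  \sum_(l < k | (j < l)%N) m l * (c j l)%:~R.
  move=> j hj; apply: eq_bigr => l hl; case: eqP => // li.
  by move: hl; rewrite li ltnNge hj.
exists (fun x => if x == i then S / 2 else m x).
move=> j hj; case: eqP => [->|/eqP ji].
  rewrite eqS // -/S; apply/andP; split; first by rewrite divr_gt0.
  rewrite ltr_pdivrMr // mulr_natr mulr2n ltrDr //.
rewrite eqS; last by apply: ltnW; rewrite ltn_neqAle eq_sym; apply/andP; split.
apply: hm.
have : val j != val i by [].
rewrite /= => hne; lia.
Qed.

Theorem theorem3p8 (k : nat) (hk : (0 < k)%N) (c : 'I_k -> 'I_k -> int)
  (hc : forall i j : 'I_k, (i < j)%N -> 0 <= c i j) (a : 'I_k -> int) :
  (bott_nef c a /\ bott_big c a) <->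
  ((forall i : 'I_k, i.+1 = k -> 0 < a i) /\
   (forall i : 'I_k, (i.+1 < k)%N -> 0 <= a i) /\
   (forall i : 'I_k, (i.+1 < k)%N -> a i = 0 ->
      exists j : 'I_k, (i < j)%N /\ c i j != 0)).
Proof.
split.
- move=> [hnef [m hm]].
  have mpos : forall i, 0 < m i.
    by move=> i; have := hm (i, false); rewrite ray_false /bott_divcoef /= oppr0.
  have ha : forall i, 0 <= a i.
    move=> i; have [m0 [heq hall]] := hnef (fun j => j == i).
    have m0z : forall j, j != i -> m0 j = 0.
      move=> j ji; have := heq (j, false).
      rewrite /bott_in_cone /= (negbTE ji) zpairE ray_false /bott_divcoef /= oppr0.
      by apply.
    have := heq (i, true); rewrite /bott_in_cone /= eqxx zpairE ray_true => /(_ isT).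
    rewrite big1; last first.
      by move=> j hj; rewrite m0z ?mul0r //; apply/eqP => ji; rewrite ji ltnn in hj.
    rewrite addr0 /bott_divcoef /= => /eqP; rewrite eqr_opp => /eqP <-.
    by have := hall (i, false); rewrite zpairE ray_false /bott_divcoef /= oppr0.
  split; last split.
  + move=> i hi; have := hm (i, true); rewrite ray_true /bott_divcoef /=.
    rewrite big_pred0; last by move=> j /=; have := ltn_ord j; lia.
    rewrite addr0 ltrN2 => h; rewrite -(ltr0z rat); exact: lt_trans (mpos i) h.
  + by move=> i _; apply: ha.
  + move=> i hi a0.
    case: (boolP [exists j : 'I_k, (i < j)%N && (c i j != 0)]).
      by move=> /existsP [j /andP [hj cj]]; exists j.
    rewrite negb_exists => /forallP hn; exfalso; move: (hm (i, true)).
    rewrite ray_true /bott_divcoef /= a0 oppr0 big1 ?addr0.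
      by rewrite oppr_gt0 ltNge (ltW (mpos i)).
    move=> j hj; have := hn j; rewrite hj /=.
    by rewrite negbK => /eqP ->; rewrite mulr0.
- move=> [h1 [h2 h3]].
  have ha : forall i, 0 <= a i.
    move=> i; have [hlt|hge] := ltnP i.+1 k; first exact: h2.
    by apply: ltW; apply: h1; have := ltn_ord i; lia.
  split.
  + move=> s; have [m [hm hpos]] := @nef_exists k c a hc ha s k (leqnn k).
    have hm' : forall j : 'I_k, m j = if s j then a j + \sum_(l < k | (j < l)%N) m l * c j l else 0.
      by move=> j; apply: hm; rewrite subnn.
    exists m; split.
    * move=> [i b]; rewrite /bott_in_cone /= => /eqP <-.
      rewrite zpairE /bott_divcoef /=; case hs: (s i).
        by rewrite ray_true sum_intz [X in - X + _]hm' hs opprD addrNK.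
      by rewrite ray_false hm' hs oppr0.
    * move=> [i b]; rewrite zpairE /bott_divcoef /=; case: b.
        rewrite ray_true sum_intz [X in - X + _]hm'; case: (s i).
          by rewrite opprD addrNK.
        rewrite oppr0 add0r; apply: (le_trans (y := 0)); first by rewrite oppr_le0.
        apply: sumr_ge0 => l hl; apply: mulr_ge0 => //; exact: hc.
      by rewrite ray_false oppr0.
  + have [m hm] := @big_exists k c a hc ha h1 h3 k (leqnn k).
    exists m => -[i b]; have /andP[m0 m1] := hm i (ltac:(rewrite subnn; lia)).
    rewrite /bott_divcoef /=; case: b.
      move: m1; rewrite ray_true; set S := (\sum_(_ < _ | _) _); set A := (a i)%:~R; move=> m1; rewrite -subr_gt0 opprK -addrA addrC subr_gt0 addrC; exact: m1.
    by rewrite ray_false oppr0.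
Qed.
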